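(* Let $m\ge 1$, let $\lambda_1,\ldots,\lambda_m\in\mathbb R$ be constants, and let $S_1,\ldots,S_m:\mathbb R^m\to\mathbb R$ be smooth functions. Let $Q_{1,0},\ldots,Q_{m,0}:\mathbb R\to\mathbb R$ be smooth initial data and let $Q_\ell:\mathbb R^+_0\times\mathbb R\to\mathbb R$, $\ell=1,\ldots,m$, be the smooth solution of $$(\partial_t+\lambda_\ell\partial_x)Q_\ell=S_\ell(Q_1,\ldots,Q_m),\qquad Q_\ell(0,x)=Q_{\ell,0}(x),\qquad \ell=1,\ldots,m.$$ Fix $\alpha\in(0,1)$. For $t\ge 0$, $x\in\mathbb R$ and $k,\ell=1,\ldots,m$ define $$\xi_{\ell k}:=x-\lambda_\ell t(1-\alpha)-\lambda_k\alpha t,\qquad Q^*_{k\ell}:=Q_{k,0}(\xi_{\ell k})+\alpha t\,S_k\big(Q_{1,0}(\xi_{\ell k}),\ldots,Q_{m,0}(\xi_{\ell k})\big),$$ and $$Q^{(1)}_\ell(t,x):=Q_{\ell,0}(x-\lambda_\ell t)+\Big(1-\frac{1}{2\alpha}\Big)t\,S_\ell\big(Q_{1,0}(x-\lambda_\ell t),\ldots,Q_{m,0}(x-\lambda_\ell t)\big)+\frac{t}{2\alpha}S_\ell\big(Q^*_{1\ell},\ldots,Q^*_{m\ell}\big).$$ Then for every fixed $x$ and every $\ell=1,\ldots,m$, $Q^{(1)}_\ell(t,x)=Q_\ell(t,x)+\mathcal O(t^3)$ as $t\to0$.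
   Context: This is an approximate (''RK2'') evolution operator for a linear hyperbolic system written in characteristic variables $Q_\ell$ with constant characteristic speeds $\lambda_\ell$ and a possibly nonlinear source $S$. *)

(* Defs.v *)
From HB Require Import structures.
From mathcomp Require Import all_boot all_order all_algebra.
From mathcomp Require Import all_classical all_reals all_analysis.
Set Implicit Arguments. Unset Strict Implicit. Unset Printing Implicit Defensive.
Import Order.TTheory GRing.Theory Num.Theory.
Import numFieldNormedType.Exports.
Local Open Scope ring_scope.

Fixpoint Ck {R : realType} {V : normedModType R} (k : nat) (f : V -> R) : Prop :=
  match k with
  | 0 => continuous f
  | k'.+1 => (forall x, differentiable f x) /\
             (forall v : V, Ck k' (fun x => derive f x v))
  end.

Definition smooth {R : realType} {V : normedModType R} (f : V -> R) : Prop :=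
  forall k, Ck k f.

Definition is_smooth_solution {R : realType} (m : nat) (lam : 'I_m -> R)
  (S : 'I_m -> 'rV[R]_m -> R) (Q0 : 'I_m -> R -> R)
  (Q : 'I_m -> R -> R -> R) : Prop :=
  (forall l, smooth (fun p : R * R => Q l p.1 p.2)) /\
  (forall l x, Q l 0 x = Q0 l x) /\
  (forall l t x, 0 <= t ->
     derive1 (fun s => Q l s x) t + lam l * derive1 (fun y => Q l t y) x
     = S l (\row_j Q j t x)).

Definition xi {R : realType} (m : nat) (lam : 'I_m -> R) (alpha t x : R)
  (l k : 'I_m) : R :=
  x - lam l * t * (1 - alpha) - lam k * alpha * t.

Definition Qstar {R : realType} (m : nat) (lam : 'I_m -> R)
  (S : 'I_m -> 'rV[R]_m -> R) (Q0 : 'I_m -> R -> R) (alpha t x : R)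
  (k l : 'I_m) : R :=
  let z := xi lam alpha t x l k in
  Q0 k z + alpha * t * S k (\row_j Q0 j z).

Definition Q1 {R : realType} (m : nat) (lam : 'I_m -> R)
  (S : 'I_m -> 'rV[R]_m -> R) (Q0 : 'I_m -> R -> R) (alpha : R)
  (l : 'I_m) (t x : R) : R :=
  let y := x - lam l * t in
  Q0 l y + (1 - (2 * alpha)^-1) * t * S l (\row_j Q0 j y)
  + t / (2 * alpha) * S l (\row_k Qstar lam S Q0 alpha t x k l).

(* Main.v *)
Require Import Defs.
From HB Require Import structures.
From mathcomp Require Import all_boot all_order all_algebra.
From mathcomp Require Import all_classical all_reals all_analysis.
From mathcomp Require Import ring lra.
Import Order.TTheory GRing.Theory Num.Theory.
Import numFieldNormedType.Exports.
Local Open Scope classical_set_scope.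
Local Open Scope ring_scope.
Set Implicit Arguments. Unset Strict Implicit. Unset Printing Implicit Defensive.

Lemma line_is_derive (R : realType) (V : normedModType R) (f : V -> R) (a v : V) (s : R) :
  differentiable f (a + s *: v) ->
  is_derive s 1 (fun th => f (a + th *: v)) ('D_v f (a + s *: v)).
Proof.
move=> df.
have E : (fun h : R => h^-1 *: (((fun th => f (a + th *: v)) \o shift s) (h *: 1) - f (a + s *: v)))
   = (fun h => h^-1 *: ((f \o shift (a + s *: v)) (h *: v) - f (a + s *: v))).
  apply: funext => h /=; congr (_ *: (f _ - _)).
  by rewrite -[h%:A]/(h * 1) mulr1 scalerDl addrCA.
split; first by rewrite /derivable E; exact: diff_derivable.
by rewrite /derive E.
Qed.

Lemma mvt_bound (R : realType) (h : R -> R) (a b B : R) : a <= b ->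
  (forall x, derivable h x 1) -> (forall x, a <= x <= b -> `|'D_1 h x| <= B) ->
  `|h b - h a| <= B * (b - a).
Proof.
move=> ab dh hB.
have hc : {within `[a, b], continuous h}.
  apply: continuous_subspaceT => x.
  by apply: differentiable_continuous; apply/derivable1_diffP.
have [c cab E] := @MVT_segment R h (fun x => 'D_1 h x) a b ab
   (fun x _ => derivableP (dh x)) hc.
rewrite E normrM (ger0_norm (x:=b-a)) ?subr_ge0 // ler_wpM2r ?subr_ge0 //; apply: hB.
by move: cab; rewrite in_itv /=.
Qed.


Lemma is_derive_lin (R : realType) (D s : R) : is_derive s 1 (fun th : R => th * D) D.
Proof.
have -> : (fun th : R => th * D) = D \*: (@id R) by apply: funext => th /=; rewrite mulrC.
have := @is_deriveZ R R^o R^o id D s 1 1 (is_derive_id _ _).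
by rewrite /GRing.scale /= mulr1.
Qed.

Lemma is_derive_quad (R : realType) (D s : R) :
  is_derive s 1 (fun th : R => th ^+ 2 / 2 * D) (s * D).
Proof.
have H := @is_deriveM R R (@id R) (fun th : R => th * (D / 2)) s 1 1 (D / 2)
   (is_derive_id _ _) (is_derive_lin _ _).
have E : (fun th : R => th ^+ 2 / 2 * D) = (@id R) * (fun th : R => th * (D / 2)).
  by apply: funext => th; rewrite -[RHS]/(th * (th * (D/2))) expr2; field.
rewrite E; apply: (is_derive_eq H).
by rewrite /GRing.scale /= mulr1 -mulrDr -splitr.
Qed.

Definition coordsys (R : realType) (V : normedModType R) (I : finType)
  (e : I -> V) (c : I -> V -> R) :=
  (forall v, v = \sum_i c i v *: e i) /\ (forall i v, `|c i v| <= `|v|).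

Lemma D_sum (R : realType) (V : normedModType R) (I : finType) (e : I -> V) c
  (f : V -> R) a v : coordsys e c -> differentiable f a ->
  'D_v f a = \sum_i c i v * 'D_(e i) f a.
Proof.
move=> [cs _] df; rewrite deriveE // {1}(cs v) linear_sum; apply: eq_bigr => i _.
by rewrite linearZ /= deriveE.
Qed.

Lemma D_B (R : realType) (V : normedModType R) (f : V -> R) a u w :
  differentiable f a -> 'D_(u - w) f a = 'D_u f a - 'D_w f a.
Proof. by move=> df; rewrite !deriveE // linearB. Qed.

Lemma D_Z (R : realType) (V : normedModType R) (f : V -> R) a (k : R) u :
  differentiable f a -> 'D_(k *: u) f a = k * 'D_u f a.
Proof. by move=> df; rewrite !deriveE // linearZ. Qed.

Lemma finmin (R : realType) (I : finType) (r : I -> R) :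
  (forall i, 0 < r i) -> exists2 s, 0 < s & forall i, s <= r i.
Proof.
move=> rp.
have : exists2 s, 0 < s & forall i, i \in enum I -> s <= r i.
  elim: (enum I) => [|j l [s s0 H]]; first by exists 1.
  exists (Num.min s (r j)); first by rewrite lt_min s0 rp.
  move=> i; rewrite inE => /orP[/eqP->|il]; first by rewrite ge_min lexx orbT.
  by rewrite ge_min H.
by case=> s s0 H; exists s => // i; apply: H; rewrite mem_enum.
Qed.

Lemma fam_near (R : realType) (V : normedModType R) (I : finType) (g : I -> V -> R) p0 :
  (forall i, continuous (g i)) ->
  exists2 r, 0 < r & forall i a, `|a - p0| < r -> `|g i a - g i p0| < 1.
Proof.
move=> gc.
have : \forall a \near p0, forall i, `|g i p0 - g i a| < 1.
  apply: filter_forall => i; exact: (cvgr_dist_lt _ _ (gc i p0) _ ltr01).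
move=> /nbhs_ballP [r r0 H]; exists r => // i a ar.
rewrite distrC; apply: H; rewrite -ball_normE /ball_ /= distrC //.
Qed.

Lemma is_derive_sub (R : realType) (u w : R -> R) (s du dw : R) :
  is_derive s 1 u du -> is_derive s 1 w dw ->
  is_derive s 1 (fun th => u th - w th) (du - dw).
Proof. move=> H1 H2; exact: is_deriveB. Qed.

Lemma dirbound (R : realType) (V : normedModType R) (I : finType) e c (f : V -> R) p0 :
  @coordsys R V I e c -> Ck 1 f ->
  exists r M, [/\ 0 < r, 0 <= M & forall a v, `|a - p0| < r -> `|'D_v f a| <= M * `|v|].
Proof.
move=> cs [df dc].
have [r r0 H] := fam_near (g := fun i a => 'D_(e i) f a) p0 (fun i => dc (e i)).
exists r, (\sum_i (`|'D_(e i) f p0| + 1)); split => //.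
  by apply: sumr_ge0 => i _; rewrite addr_ge0.
move=> a v ar; rewrite (D_sum _ cs (df a)) mulr_suml.
apply: le_trans (ler_norm_sum _ _ _) _; apply: ler_sum => i _.
rewrite normrM mulrC; apply: ler_pM => //; last by apply: cs.2.
have h := H i a ar.
rewrite -(subrK ('D_(e i) f p0) ('D_(e i) f a)).
apply: le_trans (ler_normD _ _) _.
by rewrite addrC lerD2l ltW.
Qed.

Lemma zmod_id (V : zmodType) (x u v w p : V) : x + (u - v) - p = x - p - (v - w) + (u - w).
Proof. rewrite opprB [u - w]addrC !addrA (addrAC (x - p + w) (-v)) addrK.
by rewrite [RHS]addrAC [x - p + u]addrAC [RHS]addrAC. Qed.

Lemma zmod_id2 (V : zmodType) (x u v w p : V) : x + (u - v) - p = x - v - (p - w) + (u - w).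
Proof. rewrite opprB [u - w]addrC !addrA (addrAC (x - v + w) (-p)) addrK.
by rewrite [RHS]addrAC [x - v + u]addrAC. Qed.

Lemma convex_ball (R : realType) (V : normedModType R) (a b p0 : V) r th :
  `|a - p0| < r -> `|b - p0| < r -> 0 <= th <= 1 -> `|a + th *: (b - a) - p0| < r.
Proof.
move=> ha hb /andP[t0 t1].
have -> : a + th *: (b - a) - p0 = (1 - th) *: (a - p0) + th *: (b - p0).
  by rewrite !scalerBr !scalerBl !scale1r -zmod_id2.
apply: le_lt_trans (ler_normD _ _) _.
rewrite !normrZ !ger0_norm ?subr_ge0 //.
set A := `|a - p0|; set B := `|b - p0|.
have h1 : 0 <= (1 - th) * (Num.max A B - A) by rewrite mulr_ge0 ?subr_ge0 ?le_max ?lexx.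
have h2 : 0 <= th * (Num.max A B - B) by rewrite mulr_ge0 ?subr_ge0 ?le_max ?lexx ?orbT.
have h3 : Num.max A B < r by rewrite gt_max ha hb.
lra.
Qed.

Lemma seg_ends (R : realType) (V : normedModType R) (a b : V) :
  a + 1 *: (b - a) = b /\ a + 0 *: (b - a) = a.
Proof. by rewrite scale1r scale0r addr0 addrC subrK. Qed.

Lemma lipschitz (R : realType) (V : normedModType R) (I : finType) e c (f : V -> R) p0 :
  @coordsys R V I e c -> Ck 1 f ->
  exists r L, [/\ 0 < r, 0 <= L & forall a b, `|a - p0| < r -> `|b - p0| < r ->
     `|f b - f a| <= L * `|b - a|].
Proof.
move=> cs C1; have [r [M [r0 M0 H]]] := dirbound p0 cs C1.
exists r, M; split => // a b ha hb.
have := @mvt_bound R (fun th => f (a + th *: (b - a))) 0 1 (M * `|b - a|) ler01.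
have [E1 E0] := seg_ends a b; rewrite E1 E0 subr0 mulr1; apply.
  by move=> x; have [] := line_is_derive (C1.1 (a + x *: (b - a))).
move=> x /andP[x0 x1]; have [_ ->] := line_is_derive (C1.1 (a + x *: (b - a))).
by apply: H; apply: convex_ball => //; rewrite x0 x1.
Qed.

Lemma taylor2 (R : realType) (V : normedModType R) (I : finType) e c (f : V -> R) p0 :
  @coordsys R V I e c -> Ck 2 f ->
  exists r K, [/\ 0 < r, 0 <= K & forall a b, `|a - p0| < r -> `|b - p0| < r ->
     `|f b - f a - 'D_(b - a) f a| <= K * `|b - a| ^+ 2].
Proof.
move=> cs [df dc].
have : forall i, exists rL : R * R, [/\ 0 < rL.1, 0 <= rL.2 & forall a b, `|a - p0| < rL.1 ->
     `|b - p0| < rL.1 -> `|'D_(e i) f b - 'D_(e i) f a| <= rL.2 * `|b - a|].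
  move=> i; have [r [L [r0 L0 H]]] := lipschitz p0 cs (dc (e i)).
  by exists (r, L); split.
move=> /choice [rL HrL].
have [r r0 rle] := finmin (r := fun i => (rL i).1) (fun i => match HrL i with And3 h _ _ => h end).
exists r, (\sum_i (rL i).2); split => //.
  by apply: sumr_ge0 => i _; case: (HrL i).
move=> a b ha hb.
set D := 'D_(b - a) f a.
have := @mvt_bound R (fun th => f (a + th *: (b - a)) - th * D) 0 1
   ((\sum_i (rL i).2) * `|b - a| ^+ 2) ler01.
have [E1 E0] := seg_ends a b; rewrite E1 E0 subr0 mulr1 mul1r mul0r subr0 (addrAC (f b)); apply.
  move=> x; have [] := is_derive_sub (line_is_derive (df (a + x *: (b - a)))) (is_derive_lin D x).
  done.
move=> x /andP[x0 x1].
have [_ ->] := is_derive_sub (line_is_derive (df (a + x *: (b - a)))) (is_derive_lin D x).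
set pt := a + x *: (b - a).
have hpt : `|pt - p0| < r by apply: convex_ball => //; rewrite x0 x1.
rewrite /D (D_sum _ cs (df pt)) (D_sum _ cs (df a)) -sumrB mulr_suml.
apply: le_trans (ler_norm_sum _ _ _) _; apply: ler_sum => i _.
rewrite -mulrBr normrM expr2 mulrA mulrC.
have [_ L0 Hi] := HrL i.
apply: ler_pM => //.
  apply: le_trans (Hi a pt _ _) _.
  - exact: lt_le_trans ha (rle i).
  - exact: lt_le_trans hpt (rle i).
  rewrite ler_wpM2l // /pt addrC addKr normrZ ger0_norm //.
  by rewrite ler_piMl.
exact: cs.2.
Qed.

Lemma rV_coord (R : realType) (m : nat) :
  coordsys (fun j : 'I_m => (delta_mx 0 j : 'rV[R]_m)) (fun j (v : 'rV[R]_m) => v 0 j).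
Proof.
split.
  move=> v; rewrite {1}(matrix_sum_delta v) big_ord1; apply: eq_bigr => j _.
  done.
move=> j v; rewrite [`|v|]mx_normrE.
by apply: (le_trans _ (le_bigmax _ _ (ord0, j))).
Qed.

Lemma rV_norm_le (R : realType) (m : nat) (v : 'rV[R]_m) (B : R) :
  0 <= B -> (forall j, `|v 0 j| <= B) -> `|v| <= B.
Proof.
move=> B0 H; rewrite [`|v|]mx_normrE; apply: bigmax_le => // [[i j]] _ /=.
by rewrite (ord1 i).
Qed.

Lemma RR_coord (R : realType) :
  coordsys (fun b : bool => if b then ((1, 0) : R * R) else (0, 1))
           (fun b (v : R * R) => if b then v.1 else v.2).
Proof.
split.
  move=> [v1 v2]; rewrite big_bool /=; apply: injective_projections => /=.
    by rewrite scaler0 addr0 -[v1%:A]/(v1 * 1) mulr1.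
  by rewrite scaler0 add0r -[v2%:A]/(v2 * 1) mulr1.
move=> [] [v1 v2] /=; rewrite prod_normE /= le_max lexx ?orbT //.
Qed.

Definition qf (R : realType) m (Q : 'I_m -> R -> R -> R) j := fun p : R * R => Q j p.1 p.2.

Lemma dt_eq (R : realType) m (Q : 'I_m -> R -> R -> R) j t y :
  derive1 (fun s => Q j s y) t = 'D_(((1, 0) : R * R)) (qf Q j) (t, y).
Proof.
rewrite derive1E /derive /qf /=; do 2 f_equal; apply: funext => h /=.
by rewrite scaler0 add0r.
Qed.

Lemma dx_eq (R : realType) m (Q : 'I_m -> R -> R -> R) j t y :
  derive1 (fun z => Q j t z) y = 'D_(((0, 1) : R * R)) (qf Q j) (t, y).
Proof.
rewrite derive1E /derive /qf /=; do 2 f_equal; apply: funext => h /=.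
by rewrite scaler0 add0r.
Qed.

Lemma qf_diff (R : realType) m (Q : 'I_m -> R -> R -> R) :
  (forall l, smooth (fun p : R * R => Q l p.1 p.2)) -> forall j p, differentiable (qf Q j) p.
Proof. by move=> hs j p; case: (hs j 1%N). Qed.

Lemma char_deriv (R : realType) m lam S Q0 (Q : 'I_m -> R -> R -> R) :
  is_smooth_solution lam S Q0 Q -> forall l (p : R * R), 0 <= p.1 ->
  'D_(((1, lam l)) : R * R) (qf Q l) p = S l (\row_j qf Q j p).
Proof.
move=> [hs [_ hp]] l [t y] /= t0.
rewrite (D_sum _ (RR_coord R) (qf_diff hs l (t, y))) big_bool /= mul1r -dt_eq -dx_eq.
by rewrite -(hp l t y t0) mulrC.
Qed.

Definition LipP (R : realType) (V : normedModType R) (f : V -> R) p0 (r K : R) :=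
  forall a b, `|a - p0| < r -> `|b - p0| < r -> `|f b - f a| <= K * `|b - a|.
Definition TayP (R : realType) (V : normedModType R) (f : V -> R) p0 (r K : R) :=
  forall a b, `|a - p0| < r -> `|b - p0| < r ->
     `|f b - f a - 'D_(b - a) f a| <= K * `|b - a| ^+ 2.
Definition DirP (R : realType) (V : normedModType R) (f : V -> R) p0 (r K : R) :=
  forall a v, `|a - p0| < r -> `|'D_v f a| <= K * `|v|.
Definition Mono (R : realType) (P : R -> R -> Prop) :=
  forall r r' K K', 0 < r' -> r' <= r -> K <= K' -> P r K -> P r' K'.

Lemma LipP_mono (R : realType) (V : normedModType R) (f : V -> R) p0 : Mono (LipP f p0).
Proof.
move=> r r' K K' r0 rr KK H a b ha hb.
apply: le_trans (H a b (lt_le_trans ha rr) (lt_le_trans hb rr)) _.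
by rewrite ler_wpM2r.
Qed.

Lemma TayP_mono (R : realType) (V : normedModType R) (f : V -> R) p0 : Mono (TayP f p0).
Proof.
move=> r r' K K' r0 rr KK H a b ha hb.
apply: le_trans (H a b (lt_le_trans ha rr) (lt_le_trans hb rr)) _.
by rewrite ler_wpM2r // exprn_ge0.
Qed.

Lemma DirP_mono (R : realType) (V : normedModType R) (f : V -> R) p0 : Mono (DirP f p0).
Proof.
move=> r r' K K' r0 rr KK H a v ha.
apply: le_trans (H a v (lt_le_trans ha rr)) _.
by rewrite ler_wpM2r.
Qed.

Lemma Mono_and (R : realType) (P1 P2 : R -> R -> Prop) :
  Mono P1 -> Mono P2 -> Mono (fun r K => P1 r K /\ P2 r K).
Proof. by move=> m1 m2 r r' K K' r0 rr KK [h1 h2]; split; [apply: m1 h1|apply: m2 h2]. Qed.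

Lemma combine2 (R : realType) (P1 P2 : R -> R -> Prop) :
  Mono P1 -> Mono P2 ->
  (exists r K, [/\ 0 < r, 0 <= K & P1 r K]) -> (exists r K, [/\ 0 < r, 0 <= K & P2 r K]) ->
  exists r K, [/\ 0 < r, 0 <= K & P1 r K /\ P2 r K].
Proof.
move=> m1 m2 [r1 [K1 [r10 K10 H1]]] [r2 [K2 [r20 K20 H2]]].
exists (Num.min r1 r2), (K1 + K2); split.
- by rewrite lt_min r10 r20.
- by rewrite addr_ge0.
- split.
  + by apply: (m1 r1 _ K1) => //; rewrite ?lt_min ?r10 ?r20 ?ge_min ?lexx ?lerDl.
  + by apply: (m2 r2 _ K2) => //; rewrite ?lt_min ?r10 ?r20 ?ge_min ?lexx ?orbT ?lerDr.
Qed.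

Lemma combine (R : realType) (I : finType) (P : I -> R -> R -> Prop) :
  (forall i, Mono (P i)) ->
  (forall i, exists r K, [/\ 0 < r, 0 <= K & P i r K]) ->
  exists r K, [/\ 0 < r, 0 <= K & forall i, P i r K].
Proof.
move=> m H.
have : forall i, exists rK : R * R, [/\ 0 < rK.1, 0 <= rK.2 & P i rK.1 rK.2].
  by move=> i; have [r [K h]] := H i; exists (r, K).
move=> /choice [rK HrK].
have [r r0 rle] := finmin (r := fun i => (rK i).1) (fun i => match HrK i with And3 h _ _ => h end).
have K0 : forall i, 0 <= (rK i).2 by move=> i; case: (HrK i).
exists r, (\sum_i (rK i).2); split => //.
  by apply: sumr_ge0.
move=> i; have [_ _ Hi] := HrK i; apply: (m i _ _ _ _ r0 (rle i) _ Hi).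
rewrite (bigD1 i) //= lerDl; apply: sumr_ge0 => j _; exact: K0.
Qed.

Lemma pt_eq (R : realType) (w lam th : R) :
  ((0, w) : R * R) + th *: ((1, lam) : R * R) = (th, w + th * lam).
Proof.
apply: injective_projections => /=.
  by rewrite add0r -[th%:A]/(th * 1) mulr1.
by [].
Qed.

Lemma pnorm (R : realType) (a b c d : R) :
  `|((a, b) : R * R) - (c, d)| = Num.max `|a - c| `|b - d|.
Proof. by rewrite prod_normE. Qed.

Unset Implicit Arguments.
Set Strict Implicit.

Theorem theorem2 (R : realType) (m : nat) (hm : (0 < m)%N)
  (lam : 'I_m -> R) (S : 'I_m -> 'rV[R]_m -> R) (Q0 : 'I_m -> R -> R)
  (Q : 'I_m -> R -> R -> R) (alpha : R) :
  (forall k, smooth (S k)) ->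
  (forall l, smooth (Q0 l)) ->
  is_smooth_solution lam S Q0 Q ->
  0 < alpha < 1 ->
  forall (x : R) (l : 'I_m),
    exists C delta : R, 0 < delta /\
      forall t : R, 0 <= t <= delta ->
        `|Q1 lam S Q0 alpha l t x - Q l t x| <= C * t ^+ 3.
Proof.
move=> hS hQ0 hsol /andP[al0 al1] x l.
have hsol' := hsol; case: hsol' => hQs [hQ0eq hpde].
pose P0 : R * R := (0, x).
pose A0 : 'rV[R]_m := \row_j qf Q j P0.
have [rQ [KQ [rQ0 KQ0 HQ]]] : exists r K, [/\ 0 < r, 0 <= K &
    forall j, LipP (qf Q j) P0 r K /\ TayP (qf Q j) P0 r K].
  apply: combine => j.
    exact: Mono_and (@LipP_mono _ _ _ _) (@TayP_mono _ _ _ _).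
  apply: combine2; [exact: LipP_mono|exact: TayP_mono|..].
    exact: lipschitz P0 (RR_coord R) (hQs j 1%N).
  exact: taylor2 P0 (RR_coord R) (hQs j 2%N).
have [rS [KS [rS0 KS0 [HSL [HST HSD]]]]] : exists r K, [/\ 0 < r, 0 <= K &
    (forall k, LipP (S k) A0 r K) /\ (TayP (S l) A0 r K /\ DirP (S l) A0 r K)].
  apply: combine2.
  - move=> r r' K K' r0 rr KK H k; exact: LipP_mono r0 rr KK (H k).
  - exact: Mono_and (@TayP_mono _ _ _ _) (@DirP_mono _ _ _ _).
  - apply: combine => k; [exact: LipP_mono|exact: lipschitz A0 (rV_coord R m) (hS k 1%N)].
  - apply: combine2; [exact: TayP_mono|exact: DirP_mono|..].
      exact: taylor2 A0 (rV_coord R m) (hS l 2%N).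
    exact: dirbound A0 (rV_coord R m) (hS l 1%N).
pose Lam : R := 1 + \sum_k `|lam k|.
have lamL : forall k, `|lam k| <= Lam.
  move=> k; rewrite /Lam (bigD1 k) //= addrCA lerDl addr_ge0 //.
  by apply: sumr_ge0.
have Lam1 : 1 <= Lam by rewrite lerDl sumr_ge0.
have Lam0 : 0 < Lam by apply: lt_le_trans Lam1.
pose E := (KS + 1) * (KQ + 1) * Lam.
have E0 : 0 < E by rewrite /E !mulr_gt0 // ltr_pwDr.
pose delta := Num.min 1 (Num.min (rQ / (2 * Lam)) (rS / (2 * E))).
pose K1 := KS * (KQ * Lam) ^+ 2 + KS * (KQ * Lam ^+ 2).
pose K2 := KS * (KS * KQ * Lam).
exists (K1 + K2 / (2 * alpha) + K1 * alpha / 2), delta; split.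
  by rewrite /delta !lt_min ltr01 !divr_gt0 ?mulr_gt0 //= ltr_pwDr.
move=> t /andP[t0 td].
have t1 : t <= 1 by move: td; rewrite /delta !le_min => /andP[]. 
have tQ : Lam * t < rQ.
  have : t <= rQ / (2 * Lam) by move: td; rewrite /delta !le_min => /and3P[].
  have L2 : 0 < 2 * Lam by rewrite mulr_gt0.
  rewrite ler_pdivlMr // => h; nra.
have tS : E * t < rS.
  have : t <= rS / (2 * E) by move: td; rewrite /delta !le_min => /and3P[].
  have E2 : 0 < 2 * E by rewrite mulr_gt0.
  rewrite ler_pdivlMr // => h; nra.
have LamT : 0 <= Lam * t by rewrite mulr_ge0 // ltW.
have inQ : forall (th y : R), `|th| <= Lam * t -> `|y - x| <= Lam * t ->
    `|((th, y) : R * R) - P0| < rQ.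
  move=> th y h1 h2; rewrite /P0 pnorm subr0 gt_max.
  by rewrite (le_lt_trans h1 tQ) (le_lt_trans h2 tQ).
have P0Q : `|P0 - P0| < rQ by rewrite subrr normr0.
have rowdiff : forall p p', `|p - P0| < rQ -> `|p' - P0| < rQ ->
    `|\row_j qf Q j p' - \row_j qf Q j p| <= KQ * `|p' - p|.
  move=> p p' hp hp'; apply: rV_norm_le; first by rewrite mulr_ge0.
  by move=> j; rewrite !mxE; exact: (HQ j).1.
have KQLt : KQ * (Lam * t) < rS.
  apply: le_lt_trans tS; rewrite /E -mulrA ler_wpM2r //.
  have : 0 <= KS * (KQ + 1) by rewrite mulr_ge0 // addr_ge0.
  nra.
have inS : forall p, `|p - P0| < rQ -> `|p - P0| <= Lam * t ->
    `|\row_j qf Q j p - A0| < rS.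
  move=> p hp hp'; apply: le_lt_trans KQLt.
  by apply: le_trans (rowdiff _ _ P0Q hp) _; rewrite ler_wpM2l.
have vnorm : forall k, `|((1, lam k) : R * R)| <= Lam.
  by move=> k; rewrite prod_normE ge_max normr1 Lam1 lamL.
have dS : forall k a, differentiable (S k) a by move=> k a; case: (hS k 1%N).
have dQ := qf_diff hQs.
pose al : R * R := (0, x - lam l * t).
pose vl : R * R := (1, lam l).
pose gam := fun th => \row_j qf Q j (al + th *: vl).
pose F := fun th => S l (gam th).
have pin : forall th, 0 <= th <= t -> `|al + th *: vl - P0| < rQ /\ `|al + th *: vl - P0| <= Lam * t.
  move=> th /andP[h0 h1]; rewrite /al /vl pt_eq.
  have e1 : `|th| <= Lam * t.
    rewrite ger0_norm //; apply: le_trans h1 _; rewrite ler_peMl //.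
  have e2 : `|x - lam l * t + th * lam l - x| <= Lam * t.
    rewrite (_ : x - lam l * t + th * lam l - x = lam l * (th - t)); last by ring.
    rewrite normrM (ler0_norm (x := th - t)) ?subr_le0 //.
    have := lamL l; have := normr_ge0 (lam l); nra.
  split; first exact: inQ.
  by rewrite /P0 pnorm subr0 ge_max e1 e2.
have gin : forall th, 0 <= th <= t -> `|gam th - A0| < rS.
  by move=> th hth; have [h1 h2] := pin th hth; exact: inS.
have t00 : (0 : R) <= 0 <= t by rewrite lexx t0.
pose V := \row_j 'D_vl (qf Q j) al.
pose D := 'D_V (S l) (gam 0).
have alz : al + 0 *: vl = al by rewrite scale0r addr0.
have thvl : forall th, 0 <= th -> `|th *: vl| <= Lam * th.
  by move=> th th0; rewrite normrZ ger0_norm // mulrC ler_wpM2r // vnorm.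
have hA : forall th, 0 <= th <= t -> `|F th - F 0 - th * D| <= K1 * th ^+ 2.
  move=> th hth; have th0 : 0 <= th by case/andP: hth.
  have [h1 h2] := pin th hth; have [h1' h2'] := pin 0 t00.
  have T := HST (gam 0) (gam th) (gin 0 t00) (gin th hth).
  have dif : al + th *: vl - (al + 0 *: vl) = th *: vl by rewrite alz addrC addKr.
  have gd : `|gam th - gam 0| <= KQ * (Lam * th).
    apply: le_trans (rowdiff _ _ h1' h1) _; rewrite dif ler_wpM2l //; exact: thvl.
  have gd2 : `|gam th - gam 0 - th *: V| <= KQ * (Lam * th) ^+ 2.
    apply: rV_norm_le; first by rewrite mulr_ge0 // exprn_ge0 // mulr_ge0 // ltW.
    move=> j; rewrite !mxE.
    have := (HQ j).2 _ _ h1' h1; rewrite dif alz D_Z // => H.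
    apply: le_trans H _; rewrite ler_wpM2l // lerXn2r ?nnegrE ?normr_ge0 ?(mulr_ge0 (ltW Lam0) th0) //.
    exact: thvl.
  have DD : `|'D_(gam th - gam 0) (S l) (gam 0) - th * D| <= KS * (KQ * (Lam * th) ^+ 2).
    rewrite /D -D_Z // -D_B //.
    apply: le_trans (HSD _ _ (gin 0 t00)) _; rewrite ler_wpM2l //.
  have -> : F th - F 0 - th * D = (S l (gam th) - S l (gam 0) - 'D_(gam th - gam 0) (S l) (gam 0))
      + ('D_(gam th - gam 0) (S l) (gam 0) - th * D) by rewrite /F; ring.
  apply: le_trans (ler_normD _ _) _.
  have T' : KS * `|gam th - gam 0| ^+ 2 <= KS * (KQ * (Lam * th)) ^+ 2.
    by rewrite ler_wpM2l // lerXn2r ?nnegrE ?normr_ge0 ?mulr_ge0 // ltW.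
  have -> : K1 * th ^+ 2 = KS * (KQ * (Lam * th)) ^+ 2 + KS * (KQ * (Lam * th) ^+ 2) by rewrite /K1; ring.
  apply: lerD => //; exact: le_trans T T'.
have hB : `|qf Q l (al + t *: vl) - qf Q l al - t * F 0 - t ^+ 2 / 2 * D| <= K1 * t ^+ 2 * t.
  have Hd : forall th : R, is_derive th (1 : R)
      (fun th => qf Q l (al + th *: vl) - th * F 0 - th ^+ 2 / 2 * D)
      ('D_vl (qf Q l) (al + th *: vl) - F 0 - th * D).
    move=> th; apply: is_derive_sub; last exact: is_derive_quad.
    apply: is_derive_sub; last exact: is_derive_lin.
    exact: line_is_derive.
  have := @mvt_bound R (fun th => qf Q l (al + th *: vl) - th * F 0 - th ^+ 2 / 2 * D)
     0 t (K1 * t ^+ 2) t0 (fun th => (Hd th).(ex_derive)).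
  have Hb : forall th : R, 0 <= th <= t ->
     `|'D_(1 : R) (fun th : R => qf Q l (al + th *: vl) - th * F 0 - th ^+ 2 / 2 * D) th| <= K1 * t ^+ 2.
    move=> th hth; rewrite (Hd th).(derive_val) (char_deriv hsol); last first.
      by rewrite /al /vl pt_eq /=; case/andP: hth.
    apply: le_trans (hA th hth) _; rewrite ler_wpM2l //.
      by rewrite /K1 addr_ge0 // mulr_ge0 // ?exprn_ge0 ?mulr_ge0 // ltW.
    case/andP: hth => h0 h1; rewrite lerXn2r ?nnegrE //; exact: le_trans h1.
  move=> /(_ Hb) /=; rewrite alz subr0 mul0r expr0n /= mul0r mul0r !subr0.
  by rewrite (addrAC _ (- qf Q l al)) (addrAC _ (- qf Q l al)).
have at1 : alpha * t <= t by rewrite ler_piMl // ltW.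
have hat : 0 <= alpha * t <= t by rewrite at1 mulr_ge0 // ltW.
have hC : forall k, `|qf Q k (al + (alpha * t) *: vl) - Qstar lam S Q0 alpha t x k l|
    <= KS * KQ * Lam * t ^+ 2.
  move=> k.
  pose xk := xi lam alpha t x l k.
  pose ak : R * R := (0, xk).
  pose vk : R * R := (1, lam k).
  have qeq : al + (alpha * t) *: vl = ak + (alpha * t) *: vk.
    by rewrite /al /vl /ak /vk !pt_eq /xk /xi; congr (_, _); ring.
  have qin : forall th, 0 <= th <= alpha * t ->
      `|ak + th *: vk - P0| < rQ /\ `|ak + th *: vk - P0| <= Lam * t.
    move=> th /andP[h0 h1]; rewrite /ak /vk pt_eq.
    have e1 : `|th| <= Lam * t.
      rewrite ger0_norm //; apply: le_trans (le_trans h1 at1) _; rewrite ler_peMl //.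
    have e2 : `|xk + th * lam k - x| <= Lam * t.
      rewrite /xk /xi (_ : x - lam l * t * (1 - alpha) - lam k * alpha * t + th * lam k - x
         = - (lam l * (t * (1 - alpha))) + lam k * (th - alpha * t)); last by ring.
      apply: le_trans (ler_normD _ _) _.
      rewrite normrN !normrM (ger0_norm t0) (ger0_norm (x := 1 - alpha)) ?subr_ge0 ?(ltW al1) //.
      rewrite (ler0_norm (x := th - alpha * t)) ?subr_le0 //.
      have p1 : 0 <= (Lam - `|lam l|) * (t * (1 - alpha)).
        by rewrite mulr_ge0 ?subr_ge0 ?lamL // mulr_ge0 // subr_ge0 ltW.
      have p2 : 0 <= (Lam - `|lam k|) * (alpha * t - th).
        by rewrite mulr_ge0 ?subr_ge0 ?lamL.
      have p3 : 0 <= Lam * th by rewrite mulr_ge0 // ltW.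
      move: p1 p2 p3; set a1 := `|lam l|; set a2 := `|lam k|.
      move=> p1 p2 p3; nra.
    split; first exact: inQ.
    by rewrite /P0 pnorm subr0 ge_max e1 e2.
  have Qs : Qstar lam S Q0 alpha t x k l = qf Q k ak + alpha * t * S k (\row_j qf Q j ak).
    rewrite /Qstar /qf /ak /= -/xk hQ0eq; congr (_ + _ * S k _).
    by apply/matrixP => i j; rewrite !mxE hQ0eq.
  pose H0 := S k (\row_j qf Q j ak).
  have Hd : forall th : R, is_derive th (1 : R)
      (fun th : R => qf Q k (ak + th *: vk) - th * H0) ('D_vk (qf Q k) (ak + th *: vk) - H0).
    move=> th; apply: is_derive_sub; last exact: is_derive_lin.
    exact: line_is_derive.
  have akz : ak + 0 *: vk = ak by rewrite scale0r addr0.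
  have Hb : forall th : R, 0 <= th <= alpha * t ->
     `|'D_(1 : R) (fun th : R => qf Q k (ak + th *: vk) - th * H0) th| <= KS * KQ * Lam * t.
    move=> th hth; rewrite (Hd th).(derive_val) (char_deriv hsol); last first.
      by rewrite /ak /vk pt_eq /=; case/andP: hth.
    have th0 : 0 <= th by case/andP: hth.
    have [h1 h2] := qin th hth.
    have z0 : (0 : R) <= 0 <= alpha * t by rewrite lexx mulr_ge0 // ltW.
    have [h1' h2'] := qin 0 z0.
    rewrite akz in h1' h2'.
    apply: le_trans (HSL k _ _ (inS _ h1' h2') (inS _ h1 h2)) _.
    rewrite -!mulrA ler_wpM2l //.
    apply: le_trans (rowdiff _ _ h1' h1) _.
    rewrite addrC addKr ler_wpM2l //.
    rewrite normrZ ger0_norm // mulrC; apply: ler_pM => //; first exact: vnorm.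
    case/andP: hth => _ h; exact: le_trans h at1.
  have := @mvt_bound R (fun th : R => qf Q k (ak + th *: vk) - th * H0)
     0 (alpha * t) (KS * KQ * Lam * t) (mulr_ge0 (ltW al0) t0) (fun th => (Hd th).(ex_derive)) Hb.
  rewrite /= akz mul0r !subr0 qeq Qs -/H0 => H.
  have -> : qf Q k (ak + (alpha * t) *: vk) - (qf Q k ak + alpha * t * H0)
     = qf Q k (ak + (alpha * t) *: vk) - alpha * t * H0 - qf Q k ak by ring.
  apply: le_trans H _.
  have -> : KS * KQ * Lam * t ^+ 2 = (KS * KQ * Lam * t) * t by rewrite expr2 mulrA.
  by rewrite ler_wpM2l // !mulr_ge0 // ltW.
have hD : `|S l (\row_k Qstar lam S Q0 alpha t x k l) - F (alpha * t)| <= K2 * t ^+ 2.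
  have rowQs : `|\row_k Qstar lam S Q0 alpha t x k l - gam (alpha * t)| <= KS * KQ * Lam * t ^+ 2.
    apply: rV_norm_le; first by rewrite !mulr_ge0 ?exprn_ge0 // ltW.
    by move=> k; rewrite !mxE distrC; exact: hC.
  have [h1 h2] := pin _ hat.
  have gA : `|gam (alpha * t) - A0| <= KQ * (Lam * t).
    by apply: le_trans (rowdiff _ _ P0Q h1) _; rewrite ler_wpM2l.
  have g2 : `|\row_k Qstar lam S Q0 alpha t x k l - A0| < rS.
    apply: le_lt_trans tS.
    have -> : \row_k Qstar lam S Q0 alpha t x k l - A0 =
       (\row_k Qstar lam S Q0 alpha t x k l - gam (alpha * t)) + (gam (alpha * t) - A0).
      by rewrite addrA subrK.
    apply: le_trans (ler_normD _ _) _.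
    apply: le_trans (lerD rowQs gA) _.
    have e1 : E * t = KS * KQ * Lam * t + KS * (Lam * t) + KQ * (Lam * t) + Lam * t.
      by rewrite /E; ring.
    have e2 : KS * KQ * Lam * t ^+ 2 <= KS * KQ * Lam * t.
      rewrite expr2 mulrA ler_piMr // !mulr_ge0 // ?ltW //; exact: mulr_ge0.
    have e3 : 0 <= KS * (Lam * t) by rewrite mulr_ge0.
    rewrite e1; lra.
  apply: le_trans (HSL l _ _ (gin _ hat) g2) _.
  by rewrite /K2 -mulrA ler_wpM2l // mulrA.
rewrite /Q1 /=.
have rowQ0 : \row_j Q0 j (x - lam l * t) = gam 0.
  by apply/matrixP => i j; rewrite !mxE alz /qf /= hQ0eq.
have u0 : Q0 l (x - lam l * t) = qf Q l al by rewrite /qf /= hQ0eq.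
have ut : Q l t x = qf Q l (al + t *: vl).
  by rewrite /al /vl pt_eq /qf /=; congr (Q l t _); ring.
rewrite rowQ0 u0 ut -/(F 0).
set Ss := S l (\row_k Qstar lam S Q0 alpha t x k l).
have an0 : alpha != 0 by rewrite gt_eqF.
have -> : qf Q l al + (1 - (2 * alpha)^-1) * t * F 0 + t / (2 * alpha) * Ss - qf Q l (al + t *: vl)
   = - (qf Q l (al + t *: vl) - qf Q l al - t * F 0 - t ^+ 2 / 2 * D)
     + t / (2 * alpha) * (Ss - F (alpha * t))
     + t / (2 * alpha) * (F (alpha * t) - F 0 - alpha * t * D).
  by field.
have c0 : 0 <= t / (2 * alpha) by rewrite divr_ge0 // mulr_ge0 // ltW.
apply: le_trans (ler_normD _ _) _.
apply: le_trans (lerD (ler_normD _ _) (lexx _)) _.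
rewrite normrN normrM (ger0_norm c0) normrM (ger0_norm c0).
apply: le_trans (lerD (lerD hB (ler_wpM2l c0 hD)) (ler_wpM2l c0 (hA _ hat))) _.
rewrite le_eqVlt; apply/orP; left; apply/eqP.
by field.
Qed.
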